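(* Let $p$ be the characteristic of $\mathbb{F}_q$, $t\ge1$, $l\ge1$ with $\gcd(l,p)=1$, and $m=lp^t$, so that $x^{m}-1=\prod_{s\in T_l}M_s(x)^{p^t}$. Let $v_1,v_2\in\mathcal{R}=\mathbb{F}_q[x]/(x^m-1)$ with $\gcd(v_1v_2-1,x^m-1)=1$, and for each $s\in T_l$ let $r_{1s},r_{2s}$ be integers with $0<r_{1s}<r_{2s}<p^t-r_{2(-s)}$. Let $\mathcal{C}$ be the QC code of length $2m$ generated by $\big(\prod_{s}M_s^{r_{1s}},\,v_1\prod_sM_s^{r_{1s}}\big)$ and $\big(v_2\prod_sM_s^{r_{2s}},\,\prod_sM_s^{r_{2s}}\big)$ (products over $s\in T_l$). Then $\mathcal{C}^{\perp_E}$ is the QC code generated by $\big(\prod_sM_s^{p^t-r_{1(-s)}},\,-\overline{v_2}\prod_sM_s^{p^t-r_{1(-s)}}\big)$ and $\big(-\overline{v_1}\prod_sM_s^{p^t-r_{2(-s)}},\,\prod_sM_s^{p^t-r_{2(-s)}}\big)$, and $\mathcal{C}^{\perp_E}\subseteq\mathcal{C}$.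
   Context: For an integer $s$, the $q$-cyclotomic coset modulo $l$ containing $s$ is $C_{(s,l)}=\{s,sq,\dots,sq^{i_s-1}\}\bmod l$, $i_s$ minimal with $sq^{i_s}\equiv s\pmod l$; $T_l$ is the set of smallest representatives of these cosets. For an integer $s$, $r_{i(-s)}$ denotes $r_{i s'}$ where $s'\in T_l$ is the representative of the coset containing $-s \bmod l$. With $\alpha$ a primitive $l$-th root of unity, $M_s(x)=\prod_{i\in C_{(s,l)}}(x-\alpha^i)$. Elements of $\mathcal{R}$ are identified with representatives of degree $<m$; $[k]=(k_0,\dots,k_{m-1})$; $\overline{k}(x)=k(x^{-1})\bmod(x^m-1)$. The QC code generated by $(u_{i1},u_{i2})$, $i=1,2$, is $\{([r_1u_{11}+r_2u_{21}],[r_1u_{12}+r_2u_{22}]):r_i\in\mathcal{R}\}\subseteq\mathbb{F}_q^{2m}$; $\mathcal{C}^{\perp_E}$ is the dual w.r.t. $\sum u_iv_i$. *)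

(* Defs.v *)
From HB Require Import structures.
From mathcomp Require Import all_boot all_order all_algebra all_field.
Set Implicit Arguments. Unset Strict Implicit. Unset Printing Implicit Defensive.
Import GRing.Theory.
Local Open Scope ring_scope.

Section QC.
Variable F : fieldType.

(* q-cyclotomic coset of s modulo l, as a subset of {0,...,l-1}:
   { s q^j mod l | j }  (j < l suffices since the orbit has at most l elements) *)
Definition cyc_coset (q l s : nat) : {set 'I_l} :=
  [set i : 'I_l | [exists j : 'I_l, (i : nat) == ((s * q ^ j) %% l)%N]].

Definition Tl (q l : nat) : seq nat :=
  [seq s <- iota 0 l | [forall i in cyc_coset q l s, (s <= i)%N]].

(* representative in T_l of the coset containing -s mod l *)
Definition negrep (q l s : nat) : nat :=
  \big[minn/l]_(i in cyc_coset q l ((l - s %% l) %% l)) (i : nat).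

Definition coefv (m : nat) (k : {poly F}) : 'rV[F]_m :=
  \row_(i < m) (k %% ('X^m - 1))`_i.

(* overline k = k(x^{-1}) mod (x^m - 1); in R, x^{-1} = x^(m-1) *)
Definition pbar (m : nat) (k : {poly F}) : {poly F} :=
  (k \Po 'X^(m.-1)) %% ('X^m - 1).

Definition QC_code (m : nat) (u11 u12 u21 u22 : {poly F})
  (c : 'rV[F]_m * 'rV[F]_m) : Prop :=
  exists r1 r2 : {poly F},
    c = (coefv m (r1 * u11 + r2 * u21), coefv m (r1 * u12 + r2 * u22)).

Definition edot (m : nat) (c d : 'rV[F]_m * 'rV[F]_m) : F :=
  \sum_(i < m) c.1 0 i * d.1 0 i + \sum_(i < m) c.2 0 i * d.2 0 i.

Definition edual (m : nat) (C : 'rV[F]_m * 'rV[F]_m -> Prop)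
  (c : 'rV[F]_m * 'rV[F]_m) : Prop :=
  forall d, C d -> edot c d = 0.

End QC.
Arguments coefv {F} m k.
Arguments pbar {F} m k.
Arguments QC_code {F} m u11 u12 u21 u22 c.
Arguments edot {F} m c d.
Arguments edual {F} m C c.

(* Main.v *)
Require Import Defs.
From HB Require Import structures.
From mathcomp Require Import all_boot all_order all_algebra all_field.
Import GRing.Theory.
Local Open Scope ring_scope.
Set Implicit Arguments. Unset Strict Implicit. Unset Printing Implicit Defensive.
From mathcomp Require Import cyclic zify ring.
Section Gen.
Variable K : fieldType.
Variable m : nat.
Hypothesis m_gt0 : (0 < m)%N.
Implicit Types f g h : {poly K}.

Definition Mm : {poly K} := 'X^m - 1.
Definition eqm (f g : {poly K}) := Mm %| f - g.

Lemma size_Mm : size Mm = m.+1. Proof. exact: size_Xn_sub_1. Qed.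
Lemma Mm_neq0 : Mm != 0. Proof. by rewrite -size_poly_eq0 size_Mm. Qed.

Lemma eqm_refl f : eqm f f. Proof. by rewrite /eqm subrr dvdp0. Qed.
Lemma eqm_sym f g : eqm f g -> eqm g f.
Proof. by rewrite /eqm -opprB dvdpNr. Qed.
Lemma eqm_trans f g h : eqm f g -> eqm g h -> eqm f h.
Proof. rewrite /eqm => H1 H2; have := dvdp_add H1 H2. by rewrite addrA subrK. Qed.
Lemma eqmD f1 f2 g1 g2 : eqm f1 g1 -> eqm f2 g2 -> eqm (f1 + f2) (g1 + g2).
Proof.
rewrite /eqm => H1 H2; have := dvdp_add H1 H2.
by rewrite opprD addrACA.
Qed.
Lemma eqmN f g : eqm f g -> eqm (- f) (- g).
Proof. by rewrite /eqm -opprD dvdpNr. Qed.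
Lemma eqmMl h f g : eqm f g -> eqm (h * f) (h * g).
Proof. by rewrite /eqm -mulrBr => H; apply: dvdp_mull. Qed.
Lemma eqmM f1 f2 g1 g2 : eqm f1 g1 -> eqm f2 g2 -> eqm (f1 * f2) (g1 * g2).
Proof.
move=> H1 H2; apply: (@eqm_trans _ (f1 * g2)); first exact: eqmMl.
by rewrite ![_ * g2]mulrC; apply: eqmMl.
Qed.
Lemma eqmX f g n : eqm f g -> eqm (f ^+ n) (g ^+ n).
Proof. by move=> H; elim: n => [|n IH]; rewrite ?expr0 ?eqm_refl // !exprS eqmM. Qed.
Lemma eqm_mod f : eqm (f %% Mm) f.
Proof.
rewrite /eqm; have -> : f %% Mm - f = - (f %/ Mm * Mm).
  have e : f = f %/ Mm * Mm + f %% Mm := divp_eq f Mm.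
  set d := f %/ Mm; set r := f %% Mm; rewrite {1}e.
  by rewrite opprD addrCA subrr addr0.
by rewrite dvdpNr; exact: dvdp_mull (dvdpp _).
Qed.
Lemma eqm_modE f g : eqm f g -> f %% Mm = g %% Mm.
Proof.
rewrite /eqm => /modp_eq0P; rewrite modpD modpN => /eqP.
by rewrite subr_eq0 => /eqP.
Qed.
Lemma eqm_modP f g : f %% Mm = g %% Mm -> eqm f g.
Proof.
move=> H; apply/modp_eq0P; by rewrite modpD modpN H subrr.
Qed.
Lemma eqm0 f : eqm f 0 = (Mm %| f). Proof. by rewrite /eqm subr0. Qed.

Lemma eqmXn k : eqm 'X^k 'X^(k %% m).
Proof.
rewrite {1}(divn_eq k m) mulnC exprD exprM.
rewrite -{2}['X^(k %% m)]mul1r; apply: eqmM; last exact: eqm_refl.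
rewrite -(expr1n _ (k %/ m)); apply: eqmX; by rewrite /eqm.
Qed.
Lemma XmodE k : 'X^k %% Mm = 'X^(k %% m).
Proof.
rewrite (eqm_modE (eqmXn k)) modp_small // size_Mm size_polyXn ltnS ltn_mod //.
Qed.

Definition tau (f : {poly K}) := (f %% Mm)`_0.
Lemma tau_eqm f g : eqm f g -> tau f = tau g.
Proof. by rewrite /tau => /eqm_modE ->. Qed.
Lemma tauD f g : tau (f + g) = tau f + tau g. Proof. by rewrite /tau modpD coefD. Qed.
Lemma tauZ c f : tau (c *: f) = c * tau f. Proof. by rewrite /tau modpZl coefZ. Qed.
Lemma tau0 : tau 0 = 0. Proof. by rewrite /tau mod0p coef0. Qed.
Lemma tau_sum n (F : 'I_n -> {poly K}) : tau (\sum_(i < n) F i) = \sum_(i < n) tau (F i).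
Proof.
exact: (big_morph tau tauD tau0).
Qed.
Lemma tauXn k : tau 'X^k = ((k %% m)%N == 0%N)%:R.
Proof. by rewrite /tau XmodE coefXn eq_sym. Qed.

Lemma pbarD f g : pbar m (f + g) = pbar m f + pbar m g.
Proof. by rewrite /pbar comp_polyD modpD. Qed.
Lemma pbarN f : pbar m (- f) = - pbar m f.
Proof. by rewrite /pbar -sub0r comp_polyB comp_poly0 sub0r modpN. Qed.
Lemma eqm_pbar f : eqm (pbar m f) (f \Po 'X^(m.-1)).
Proof. exact: eqm_mod. Qed.
Lemma pbar_eqm f g : eqm f g -> eqm (pbar m f) (pbar m g).
Proof.
move=> H; apply: eqm_trans (eqm_pbar f) _; apply: eqm_sym; apply: eqm_trans (eqm_pbar g) _.
apply: eqm_sym; rewrite /eqm -comp_polyB.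
apply: dvdp_trans (dvdp_comp_poly _ H).
rewrite /Mm comp_polyB comp_Xn_poly -polyC1 comp_polyC polyC1 -exprM.
have := eqmXn (m.-1 * m); rewrite modnMl; by rewrite /eqm.
Qed.
Lemma pbarM f g : eqm (pbar m (f * g)) (pbar m f * pbar m g).
Proof.
apply: eqm_trans (eqm_pbar _) _; rewrite comp_polyM.
apply: eqmM; apply: eqm_sym; exact: eqm_pbar.
Qed.
Lemma pbarC (c : K) : pbar m c%:P = c%:P.
Proof.
rewrite /pbar comp_polyC modp_small // size_Mm ltnS (leq_trans (size_polyC_leq1 c)) //.
Qed.
Lemma pbarXn k : eqm (pbar m ('X^k : {poly K})) 'X^(k * m.-1).
Proof. apply: eqm_trans (eqm_pbar _) _; rewrite comp_Xn_poly -exprM mulnC; exact: eqm_refl. Qed.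

End Gen.

Lemma map_pbar (K L : fieldType) (phi : {rmorphism K -> L}) m f :
  map_poly phi (pbar m f) = pbar m (map_poly phi f).
Proof.
by rewrite /pbar map_modp map_comp_poly rmorphB /= map_polyXn rmorph1 map_polyXn.
Qed.
Lemma map_Mm (K L : fieldType) (phi : {rmorphism K -> L}) m :
  map_poly phi (Mm K m) = Mm L m.
Proof. by rewrite /Mm rmorphB /= map_polyXn rmorph1. Qed.
Lemma arith1 m i j : (i < m)%N -> (j < m)%N -> (((i + j * m.-1) %% m == 0)%N = (i == j)).
Proof.
move=> im jm.
have E : (i + j * m.-1 + j = i + j * m)%N.
  by case: m im jm => // m' _ _ /=; rewrite mulnS; ring.
apply/idP/idP => [/eqP H|/eqP ->].
  have : ((i + j * m.-1 + j) %% m = j)%N by rewrite -modnDml H add0n modn_small.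
  by rewrite E addnC modnMDl modn_small // => ->.
have -> : (j + j * m.-1 = j * m)%N by clear E; case: m im jm => // m' _ _ /=; rewrite mulnS; ring.
by rewrite modnMl.
Qed.

Lemma arith2 m i k : (i < m)%N -> (k < m)%N -> (((i + (m - k)) %% m == 0)%N = (i == k)).
Proof.
move=> im km; case: (ltnP i k) => h.
  rewrite modn_small; last by lia.
  apply/idP/idP => /eqP; lia.
have -> : (i + (m - k) = (i - k) + m)%N by lia.
rewrite modnDr modn_small; last by lia.
apply/idP/idP => /eqP; lia.
Qed.

Section Gen2.
Variable K : fieldType.
Variable m : nat.
Hypothesis m_gt0 : (0 < m)%N.
Implicit Types f g h : {poly K}.

Lemma poly_wide (p : {poly K}) n : (size p <= n)%N -> p = \sum_(i < n) p`_i *: 'X^i.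
Proof.
move=> hs; rewrite -poly_def; apply/polyP => i; rewrite coef_poly.
case: ltnP => // h; rewrite nth_default //; exact: leq_trans h.
Qed.

Lemma size_modM f : (size (f %% Mm K m)%R <= m)%N.
Proof. have := ltn_modpN0 f (Mm_neq0 K m_gt0); by rewrite size_Mm. Qed.

Lemma coefv_eqm f g : eqm m f g -> coefv m f = coefv m g.
Proof. move=> H; apply/rowP => i; rewrite !mxE; by rewrite (eqm_modE H). Qed.

Definition rpoly (r : 'rV[K]_m) : {poly K} := \sum_(i < m) r 0 i *: 'X^i.

Lemma coef_rpoly (r : 'rV[K]_m) k :
  (rpoly r)`_k = \sum_(i < m) r 0 i * (k == i)%:R.
Proof.
rewrite /rpoly; elim/big_rec2: _ => [|i y1 y2 _ <-]; first by rewrite coef0.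
by rewrite coefD coefZ coefXn.
Qed.

Lemma coefv_poly (r : 'rV[K]_m) : coefv m (rpoly r) = r.
Proof.
have sz : (size (rpoly r) <= m)%N.
  apply/leq_sizeP => k km; rewrite coef_rpoly big1 // => i _.
  by rewrite (_ : (k == i) = false) ?mulr0 //; apply/negbTE; rewrite neq_ltn (leq_trans (ltn_ord i) km) orbT.
apply/rowP => i; rewrite mxE modp_small; last by rewrite (size_Mm K m_gt0) ltnS.
rewrite coef_rpoly (bigD1 i) //= eqxx mulr1 big1 ?addr0 // => j /negbTE ji.
by rewrite (_ : (nat_of_ord i == j) = false) ?mulr0 //; apply/negbTE; move: ji; apply: contraFN => /eqP e; apply/eqP/val_inj.
Qed.

Lemma comp_sum n (a : 'I_n -> K) (F : 'I_n -> {poly K}) q :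
  (\sum_(i < n) a i *: F i) \Po q = \sum_(i < n) a i *: (F i \Po q).
Proof.
elim/big_rec2: _ => [|i y1 y2 _ <-]; first by rewrite comp_poly0.
by rewrite comp_polyD comp_polyZ.
Qed.

Lemma keyK f g :
  \sum_(i < m) (coefv m f) 0 i * (coefv m g) 0 i = tau m (f * pbar m g).
Proof.
set f' := f %% Mm K m; set g' := g %% Mm K m.
have -> : tau m (f * pbar m g) = tau m (f' * (g' \Po 'X^(m.-1))).
  apply: tau_eqm; apply: eqmM; first by apply: eqm_sym; exact: eqm_mod _ _.
  apply: eqm_trans (pbar_eqm (eqm_sym (eqm_mod _ g))) _.
  exact: eqm_pbar.
have Ef : f' = \sum_(i < m) f'`_i *: 'X^i := poly_wide (size_modM f).
have Eg : g' = \sum_(i < m) g'`_i *: 'X^i := poly_wide (size_modM g).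
rewrite {1}Ef {1}Eg comp_sum.
rewrite big_distrl /= tau_sum.
apply: eq_bigr => i _; rewrite big_distrr /= tau_sum.
rewrite (bigD1 i) //= big1 ?addr0.
  rewrite comp_Xn_poly -exprM -scalerAl -scalerAr tauZ tauZ -exprD (tauXn _ m_gt0).
  by rewrite [(m.-1 * _)%N]mulnC arith1 // eqxx mulr1 !mxE.
move=> j /negbTE ji.
rewrite comp_Xn_poly -exprM -scalerAl -scalerAr tauZ tauZ -exprD (tauXn _ m_gt0).
have ji2 : (nat_of_ord i == j) = false by rewrite eq_sym; exact: ji.
by rewrite [(m.-1 * _)%N]mulnC arith1 // ji2 !mulr0.
Qed.

Lemma keyZ h : (forall j, tau m ('X^j * h) = 0) -> eqm m h 0.
Proof.
move=> H; rewrite /eqm subr0; apply/modp_eq0P.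
set h' := h %% Mm K m.
have E j : tau m ('X^j * h) = \sum_(i < m) h'`_i * ((i + j) %% m == 0)%N%:R.
  rewrite (tau_eqm (eqmMl _ (eqm_sym (eqm_mod _ h)))) -/h'.
  have Eh : h' = \sum_(i < m) h'`_i *: 'X^i := poly_wide (size_modM h).
  rewrite {1}Eh big_distrr /= tau_sum.
  apply: eq_bigr => i _; by rewrite -scalerAr tauZ -exprD (tauXn _ m_gt0) addnC.
apply/polyP => k; rewrite coef0.
case: (ltnP k m) => km; last by rewrite nth_default // (leq_trans (size_modM h)).
have := H (m - k)%N; rewrite E (bigD1 (Ordinal km)) //= big1 ?addr0.
  by rewrite arith2 // eqxx mulr1.
move=> i /negbTE ik; rewrite arith2 //.
have -> : (nat_of_ord i == k) = false by exact: ik.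
by rewrite mulr0.
Qed.

End Gen2.
Lemma eqm_prod (K : fieldType) m (I : Type) (r : seq I) (P : pred I) (F G : I -> {poly K}) :
  (forall i, P i -> eqm m (F i) (G i)) ->
  eqm m (\prod_(i <- r | P i) F i) (\prod_(i <- r | P i) G i).
Proof.
move=> H; elim/big_rec2: _ => [|i y1 y2 Pi Hy]; first exact: eqm_refl.
exact: eqmM (H i Pi) Hy.
Qed.

Lemma pbar1 (K : fieldType) m : (0 < m)%N -> pbar m (1 : {poly K}) = 1.
Proof. by move=> m0; rewrite -polyC1 pbarC. Qed.

Lemma pbar_prod (K : fieldType) m (I : Type) (r : seq I) (P : pred I) (F : I -> {poly K}) :
  (0 < m)%N ->
  eqm m (pbar m (\prod_(i <- r | P i) F i)) (\prod_(i <- r | P i) pbar m (F i)).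
Proof.
move=> m0; elim/big_rec2: _ => [|i y1 y2 Pi Hy]; first by rewrite pbar1 // eqm_refl.
apply: eqm_trans (pbarM _ _ _) _; exact: eqmM (eqm_refl _ _) Hy.
Qed.

Lemma pbarX (K : fieldType) m (f : {poly K}) n : (0 < m)%N ->
  eqm m (pbar m (f ^+ n)) (pbar m f ^+ n).
Proof.
move=> m0; elim: n => [|n IH]; first by rewrite !expr0 pbar1 // eqm_refl.
rewrite !exprS; apply: eqm_trans (pbarM _ _ _) _; exact: eqmM (eqm_refl _ _) IH.
Qed.

Lemma pbar_lin (K : fieldType) m (a : K) : (0 < m)%N -> a != 0 ->
  eqm m ('X * pbar m ('X - a%:P)) ((- a)%:P * ('X - (a^-1)%:P)).
Proof.
move=> m0 a0.
have h1 : eqm m (pbar m ('X - a%:P)) ('X^(m.-1) - a%:P).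
  rewrite pbarD pbarN pbarC //; apply: eqmD (eqm_refl _ _).
  have := pbarXn K m 1; by rewrite expr1 mul1n.
apply: eqm_trans (eqmMl _ h1) _.
have -> : 'X * ('X^(m.-1) - a%:P) = ('X^m - 'X * a%:P : {poly K}).
  by rewrite mulrBr -exprS prednK.
have -> : (- a)%:P * ('X - a^-1%:P) = (1 - 'X * a%:P : {poly K}).
  have e : (- a)%:P * (a^-1)%:P = -1 :> {poly K} by rewrite -polyCM mulNr mulfV // rmorphN1.
  rewrite mulrBr e polyCN; ring.
by rewrite /eqm opprB addrA subrK.
Qed.

Lemma pbar_prod_lin (K : fieldType) m (I : finType) (S : {pred I}) (a : I -> K) :
  (0 < m)%N -> (forall i, a i != 0) ->
  eqm m ('X^#|S| * pbar m (\prod_(i in S) ('X - (a i)%:P)))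
        (\prod_(i in S) ((- a i)%:P * ('X - ((a i)^-1)%:P))).
Proof.
move=> m0 a0; rewrite -prodr_const.
apply: eqm_trans (eqmMl _ (pbar_prod _ _ _ m0)) _.
rewrite -big_split /=; apply: eqm_prod => i _; exact: pbar_lin.
Qed.

Lemma frobB (R : comNzRingType) p (x y : R) : p \in [pchar R] ->
  (x - y) ^+ p = x ^+ p - y ^+ p.
Proof.
move=> H; have := pFrobenius_autB_comm H (mulrC x y).
by rewrite !pFrobenius_autE.
Qed.

Lemma XmFrob (K : fieldType) p t l : p \in [pchar K] ->
  ('X^(l * p ^ t) - 1 : {poly K}) = ('X^l - 1) ^+ (p ^ t).
Proof.
move=> H; have Hp : p \in [pchar {poly K}] by rewrite pchar_poly.
elim: t => [|t IH]; first by rewrite expn0 muln1 expr1.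
by rewrite expnSr mulnA (exprM ('X^l - 1)) -IH frobB // expr1n exprM.
Qed.
Section Cos.
Variables q l : nat.
Hypothesis l_gt0 : (0 < l)%N.
Hypothesis qco : coprime q l.

Local Notation C := (cyc_coset q l).
Definition rep x := \big[minn/l]_(i in C x) (i : nat).

Lemma totient_le : (totient l <= l)%N.
Proof.
rewrite totient_count_coprime.
apply: (@leq_trans (\sum_(0 <= d < l) 1)%N).
  by apply: leq_sum => i _; exact: leq_b1.
by rewrite sum_nat_const_nat muln1 subn0.
Qed.

Lemma memCP x (i : 'I_l) : reflect (exists j, (i : nat) = (x * q ^ j) %% l)%N (i \in C x).
Proof.
rewrite inE; apply: (iffP existsP) => [[j /eqP ->]|[j ->]]; first by exists j.
have e_gt0 : (0 < totient l)%N by rewrite totient_gt0.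
have jl : (j %% totient l < l)%N by apply: leq_trans (ltn_pmod _ e_gt0) totient_le.
exists (Ordinal jl); apply/eqP => /=.
set e := totient l.
have h : ((q ^ (j %/ e * e)) %% l = 1 %% l)%N.
  by rewrite mulnC expnM -modnXm Euler_exp_totient // modnXm exp1n.
have -> : (x * q ^ j = (x * q ^ (j %% e)) * q ^ (j %/ e * e))%N.
  by rewrite {1}(divn_eq j e) expnD mulnA mulnAC.
by rewrite -modnMmr h modnMmr muln1.
Qed.

Lemma C_mod x : C (x %% l) = C x.
Proof.
apply/setP => i; apply/memCP/memCP => -[j ->]; exists j; by rewrite modnMml.
Qed.

Lemma C_self x : Ordinal (ltn_pmod x l_gt0) \in C x.
Proof. apply/memCP; exists 0%N; by rewrite expn0 muln1. Qed.

Lemma C_trans x (i k : 'I_l) : i \in C x -> k \in C i -> k \in C x.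
Proof.
move=> /memCP [j ej] /memCP [j' ej']; apply/memCP; exists (j + j')%N.
by rewrite ej' ej modnMml expnD mulnA.
Qed.

Lemma C_sym x (i : 'I_l) : i \in C x -> Ordinal (ltn_pmod x l_gt0) \in C i.
Proof.
move=> /memCP [j ej]; apply/memCP => /=; exists (totient l * j - j)%N.
have le : (j <= totient l * j)%N by rewrite leq_pmull // totient_gt0.
rewrite ej modnMml -mulnA -expnD subnKC // expnM mulnC -modnMm -modnXm.
by rewrite Euler_exp_totient // modnXm exp1n modnMm mul1n.
Qed.

Lemma C_same x y : Ordinal (ltn_pmod y l_gt0) \in C x -> C y = C x.
Proof.
move=> H; apply/setP => k; apply/idP/idP => Hk.
  apply: C_trans H _; by rewrite /= C_mod.
have H2 := C_sym H.
rewrite -C_mod; apply: (C_trans H2); by rewrite /= C_mod.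
Qed.
Lemma ordE (i : 'I_l) : Ordinal (ltn_pmod i l_gt0) = i.
Proof. by apply/val_inj; rewrite /= modn_small. Qed.

Lemma rep_le x (i : 'I_l) : i \in C x -> (rep x <= i)%N.
Proof.
rewrite /rep -big_filter => Hi.
have : i \in [seq j <- index_enum 'I_l | j \in C x] by rewrite mem_filter Hi mem_index_enum.
elim: [seq _ <- _ | _] => //= a s IH; rewrite inE big_cons => /orP [/eqP ->|/IH h].
  exact: geq_minl.
exact: leq_trans (geq_minr _ _) h.
Qed.

Lemma rep_lt x : (rep x < l)%N.
Proof.
have : rep x = l \/ exists i : 'I_l, rep x = i.
  rewrite /rep; elim/big_rec: _ => [|i y _ [->|[k ->]]]; first by left.
    by right; exists i; rewrite /minn ltn_ord.
  by right; rewrite /minn; case: ifP => _; [exists i|exists k].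
case=> [E|[k ->]] //.
have := rep_le (C_self x); rewrite E /= => H.
by have := leq_ltn_trans H (ltn_pmod x l_gt0); rewrite ltnn.
Qed.

Lemma rep_C x : Ordinal (rep_lt x) \in C x.
Proof.
have : (exists i : 'I_l, i \in C x /\ rep x = i).
  have : rep x = l \/ exists i : 'I_l, i \in C x /\ rep x = i.
    rewrite /rep; elim/big_rec: _ => [|i y Hi [->|[k [Hk ->]]]]; first by left.
      by right; exists i; rewrite /minn ltn_ord.
    by right; rewrite /minn; case: ifP => _; [exists i|exists k].
  by case=> // E; have := rep_lt x; rewrite E ltnn.
case=> i [Hi E]; suff -> : Ordinal (rep_lt x) = i by [].
by apply/val_inj.
Qed.

Lemma rep_eqC x y : C x = C y -> rep x = rep y.
Proof. by rewrite /rep => ->. Qed.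

Lemma Tl_P s : s \in Tl q l -> (s < l)%N /\ forall i : 'I_l, i \in C s -> (s <= i)%N.
Proof.
rewrite mem_filter mem_iota add0n => /andP [/forall_inP H /andP[_ sl]]; split => // i Hi; exact: H.
Qed.

Lemma Tl_rep x : rep x \in Tl q l.
Proof.
rewrite mem_filter mem_iota add0n rep_lt leq0n !andbT; apply/forall_inP => i Hi.
apply: rep_le; exact: C_trans (rep_C x) Hi.
Qed.

Lemma Tl_repE s : s \in Tl q l -> rep s = s.
Proof.
move=> /Tl_P [sl H]; apply/eqP; rewrite eqn_leq; apply/andP; split.
  have := rep_le (C_self s); by rewrite /= modn_small.
exact: H (rep_C s).
Qed.

Lemma Tl_mem s (i : 'I_l) : s \in Tl q l -> (i \in C s) = (s == rep i).
Proof.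
move=> Hs; apply/idP/idP => [Hi|/eqP ->].
  rewrite -(Tl_repE Hs); apply/eqP/rep_eqC/esym/C_same; by rewrite ordE.
have := C_sym (rep_C i); by rewrite ordE.
Qed.

Definition sig (i : 'I_l) : 'I_l := Ordinal (ltn_pmod (l - i) l_gt0).

Lemma sigK : involutive sig.
Proof.
move=> i; apply/val_inj => /=.
case: (posnP i) => [->|ip]; first by rewrite subn0 modnn subn0 modnn.
rewrite (modn_small (_ : l - i < l)%N); last by have := ltn_ord i; lia.
rewrite (_ : l - (l - i) = i)%N; last by have := ltn_ord i; lia.
by rewrite modn_small.
Qed.

Lemma mod_cancel x y i : ((x + i) %% l = 0 -> (y + i) %% l = 0 -> x %% l = y %% l)%N.
Proof.
move=> h1 h2.
have -> : (x %% l = (x + (i + y)) %% l)%N by rewrite -modnDmr [(i + y)%N]addnC h2 addn0.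
by rewrite addnA -modnDml h1 add0n.
Qed.

Lemma negC a b (i : 'I_l) : ((a + b) %% l = 0)%N -> i \in C a -> sig i \in C b.
Proof.
move=> hab /memCP [j ej]; apply/memCP; exists j => /=.
apply: (@mod_cancel _ _ i).
  rewrite subnK ?modnn //; exact: ltnW.
by rewrite ej modnDmr -mulnDl addnC -modnMml hab mul0n mod0n.
Qed.

Lemma tplus s : ((s + (l - s %% l) %% l) %% l = 0)%N.
Proof.
rewrite modnDmr -modnDml subnKC ?modnn //; exact: ltnW (ltn_pmod _ l_gt0).
Qed.

Lemma negrepE s : negrep q l s = rep ((l - s %% l) %% l).
Proof. by []. Qed.

Lemma C_negrep s (i : 'I_l) : (i \in C (negrep q l s)) = (sig i \in C s).
Proof.
set t := ((l - s %% l) %% l)%N.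
have Ct : C (negrep q l s) = C t.
  rewrite negrepE; apply: C_same; rewrite -/t.
  have -> : Ordinal (ltn_pmod (rep t) l_gt0) = Ordinal (rep_lt t) by apply/val_inj; rewrite /= modn_small // rep_lt.
  exact: rep_C.
rewrite Ct; apply/idP/idP => H.
  apply: negC H; by rewrite addnC tplus.
rewrite -(sigK i); apply: negC H; exact: tplus.
Qed.

Lemma negrep_Tl s : negrep q l s \in Tl q l.
Proof. exact: Tl_rep. Qed.

Lemma negrepK s : s \in Tl q l -> negrep q l (negrep q l s) = s.
Proof.
move=> Hs; rewrite [in LHS]negrepE -[in RHS](Tl_repE Hs); apply: rep_eqC; apply: C_same.
set n := negrep q l s.
have nl : (n < l)%N by exact: rep_lt.
have -> : Ordinal (ltn_pmod ((l - n %% l) %% l) l_gt0) = sig (Ordinal nl).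
  by apply/val_inj; rewrite /= [(n %% l)%N](modn_small nl) ?modn_mod.
rewrite -C_negrep.
have e : Ordinal (ltn_pmod n l_gt0) = Ordinal nl by apply/val_inj; rewrite /= modn_small.
rewrite -e; exact: C_self.
Qed.
Lemma Tl_uniq : uniq (Tl q l).
Proof. exact/filter_uniq/iota_uniq. Qed.

Lemma part_prod (R : comNzRingType) (F : 'I_l -> R) :
  \prod_(i < l) F i = \prod_(s <- Tl q l) \prod_(i in C s) F i.
Proof.
rewrite [RHS]big_seq [RHS](eq_bigr (fun s => \prod_(i < l) (if s == rep i then F i else 1))); last first.
  move=> s Hs; rewrite big_mkcond /=; apply: eq_bigr => i _; by rewrite (Tl_mem _ Hs).
rewrite -big_seq exchange_big /=; apply: eq_bigr => i _.
rewrite (bigD1_seq (rep i) (Tl_rep i) Tl_uniq) /= eqxx big1 ?mulr1 //.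
by move=> s /negbTE ->.
Qed.

Lemma reindex_neg (R : comNzRingType) (G : 'I_l -> R) s :
  \prod_(i in C s) G (sig i) = \prod_(j in C (negrep q l s)) G j.
Proof.
rewrite [RHS](reindex_inj (can_inj sigK)) /=; apply: eq_bigl => i.
by rewrite C_negrep sigK.
Qed.
End Cos.
Section Main.
Variables (F L : fieldType) (phi : {rmorphism F -> L}) (alpha : L) (M : nat -> {poly F}).
Variables (q l m : nat).
Hypothesis l_gt0 : (0 < l)%N.
Hypothesis qco : coprime q l.
Hypothesis m_gt0 : (0 < m)%N.
Hypothesis prim : l.-primitive_root alpha.
Hypothesis HM : forall s, s \in Tl q l ->
  map_poly phi (M s) = \prod_(i in cyc_coset q l s) ('X - (alpha ^+ i)%:P).

Local Notation C := (cyc_coset q l).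
Local Notation T := (Tl q l).
Local Notation neg := (negrep q l).

Lemma Xl_prod : ('X^l - 1 : {poly F}) = \prod_(s <- T) M s.
Proof.
apply: (map_poly_inj phi); rewrite rmorph_prod /= rmorphB /= map_polyXn rmorph1.
rewrite -(factor_Xn_sub_1 prim) big_mkord (part_prod l_gt0 qco).
rewrite big_seq [RHS]big_seq; apply: eq_bigr => s Hs; by rewrite HM.
Qed.

Lemma alpha_neq0 : alpha != 0.
Proof.
apply/negP => /eqP a0; have := prim_expr_order prim; rewrite a0 expr0n.
by case: l l_gt0 => // n _ /= /eqP; rewrite eq_sym oner_eq0.
Qed.

Lemma alpha_sig (i : 'I_l) : alpha ^+ (sig l_gt0 i) = (alpha ^+ i)^-1.
Proof.
rewrite /= (prim_expr_mod prim).
have ai : alpha ^+ i != 0 by rewrite expf_neq0 // alpha_neq0.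
apply: (mulIf ai); rewrite mulVf // -exprD subnK ?(ltnW (ltn_ord i)) //.
exact: prim_expr_order.
Qed.

Lemma phi_c0 s : s \in T -> phi ((M s)`_0) = \prod_(i in C s) (- alpha ^+ i).
Proof.
move=> Hs; rewrite -coef_map HM // -horner_coef0 horner_prod.
by apply: eq_bigr => i _; rewrite hornerXsubC sub0r.
Qed.

Lemma c0_neq0 s : s \in T -> (M s)`_0 != 0.
Proof.
move=> Hs; rewrite -(fmorph_eq0 phi) phi_c0 //; apply/prodf_neq0 => i _.
by rewrite oppr_eq0 expf_neq0 // alpha_neq0.
Qed.

Lemma F2 s : s \in T ->
  eqm m ('X^#|C s| * pbar m (M s)) (((M s)`_0)%:P * M (neg s)).
Proof.
move=> Hs; rewrite /eqm -(dvdp_map phi) map_Mm rmorphB /= !rmorphM /= map_polyXn map_pbar.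
rewrite map_polyC /= HM // HM ?negrep_Tl //.
apply: eqm_trans (pbar_prod_lin (a := fun i : 'I_l => alpha ^+ i) _ m_gt0 _) _.
  by move=> i; rewrite expf_neq0 // alpha_neq0.
rewrite big_split /= -rmorph_prod phi_c0 //.
rewrite -(reindex_neg l_gt0 qco (fun j : 'I_l => 'X - (alpha ^+ j)%:P)).
have E : \prod_(i in C s) ('X - ((alpha ^+ i)^-1)%:P) =
   \prod_(i in C s) ('X - (alpha ^+ (sig l_gt0 i))%:P) :> {poly L}.
  by apply: eq_bigr => i _; rewrite alpha_sig.
rewrite E; exact: eqm_refl.
Qed.

Definition us s := ((M s)`_0)%:P * 'X^(m.-1 * #|C s|).
Definition us' s := (((M s)`_0)^-1)%:P * 'X^(#|C s|).

Lemma Xmd_eqm d : eqm m ('X^(m.-1 * d) * 'X^d) (1 : {poly F}).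
Proof.
rewrite -exprD.
have -> : (m.-1 * d + d = m * d)%N by case: (m) m_gt0 => //= n _; rewrite mulSn addnC.
have := eqmXn F m (m * d); by rewrite modnMr expr0.
Qed.

Lemma us_unit s : s \in T -> eqm m (us s * us' s) 1.
Proof.
move=> Hs; rewrite /us /us' mulrACA -polyCM mulfV ?c0_neq0 // polyC1 mul1r.
exact: Xmd_eqm.
Qed.

Lemma F2u s : s \in T -> eqm m (pbar m (M s)) (us s * M (neg s)).
Proof.
move=> Hs; apply: (@eqm_trans _ _ _ ('X^(m.-1 * #|C s|) * ('X^#|C s| * pbar m (M s)))).
  rewrite mulrA -{1}[pbar m (M s)]mul1r; apply: eqmM (eqm_refl _ _).
  apply: eqm_sym; exact: Xmd_eqm.
rewrite /us; apply: eqm_trans (eqmMl _ (F2 Hs)) _.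
rewrite mulrA [_ * _%:P]mulrC; exact: eqm_refl.
Qed.

Lemma perm_neg : perm_eq (map neg T) T.
Proof.
apply: uniq_perm; last first.
- move=> x; apply/mapP/idP => [[y Hy ->]|Hx]; first exact: negrep_Tl.
  by exists (neg x); rewrite ?negrep_Tl ?(negrepK l_gt0 qco Hx).
- exact: (Tl_uniq q l).
rewrite map_inj_in_uniq ?(Tl_uniq q l) // => x y Hx Hy E.
by rewrite -(negrepK l_gt0 qco Hx) E (negrepK l_gt0 qco Hy).
Qed.

Lemma reindexT (G : nat -> nat -> {poly F}) :
  \prod_(s <- T) G (neg s) s = \prod_(s <- T) G s (neg s).
Proof.
rewrite -[RHS](perm_big _ perm_neg) big_map big_seq [RHS]big_seq.
by apply: eq_bigr => s Hs; rewrite (negrepK l_gt0 qco Hs).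
Qed.

Lemma pbar_P (e : nat -> nat) : exists u u' : {poly F},
  eqm m (u * u') 1 /\
  eqm m (pbar m (\prod_(s <- T) M s ^+ e s)) (u * \prod_(s <- T) M s ^+ e (neg s)).
Proof.
exists (\prod_(s <- T) us s ^+ e s), (\prod_(s <- T) us' s ^+ e s); split.
  rewrite -big_split /=; apply: (@eqm_trans _ _ _ (\prod_(s <- T) 1)); last first.
    rewrite big1_eq; exact: eqm_refl.
  rewrite big_seq [X in eqm _ _ X]big_seq; apply: eqm_prod => s Hs.
  rewrite -exprMn -(expr1n _ (e s)); apply: eqmX; exact: us_unit.
apply: eqm_trans (pbar_prod _ _ _ m_gt0) _.
rewrite -(reindexT (fun a b => M a ^+ e b)) -big_split /= big_seq [X in eqm _ _ X]big_seq.
apply: eqm_prod => s Hs; apply: eqm_trans (pbarX _ _ m_gt0) _.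
rewrite -exprMn; apply: eqmX; exact: F2u.
Qed.

End Main.
Section Dual.
Variable K : fieldType.
Variable m : nat.
Hypothesis m_gt1 : (1 < m)%N.
Let m_gt0 : (0 < m)%N. Proof. exact: ltnW. Qed.

Lemma edot_coefv (a b d1 d2 : {poly K}) :
  edot m (coefv m a, coefv m b) (coefv m d1, coefv m d2) =
  tau m (a * pbar m d1 + b * pbar m d2).
Proof. by rewrite /edot /= !keyK // tauD. Qed.

Lemma pbarXinv j : eqm m (pbar m ('X^(j * m.-1) : {poly K})) 'X^j.
Proof.
apply: eqm_trans (pbarXn K m _) _; apply: eqm_trans (eqmXn K m _) _.
apply: eqm_sym; apply: eqm_trans (eqmXn K m _) _.
have -> : (j * m.-1 * m.-1 = j * m.-2 * m + j)%N.
  by case: (m) m_gt1 => [|[|n]] //= _; rewrite -mulnA mulnSr !mulSn mulnS; ring.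
rewrite modnMDl; exact: eqm_refl.
Qed.

Lemma pbar0 : pbar m (0 : {poly K}) = 0.
Proof. by rewrite /pbar comp_poly0 mod0p. Qed.

Lemma core_eqm (P1 P2 v1 v2 a b r1 r2 : {poly K}) :
  eqm m (a * pbar m (r1 * P1 + r2 * (v2 * P2)) + b * pbar m (r1 * (v1 * P1) + r2 * P2))
        (pbar m r1 * ((a + b * pbar m v1) * pbar m P1) + pbar m r2 * ((a * pbar m v2 + b) * pbar m P2)).
Proof.
have h1 : eqm m (pbar m (r1 * P1 + r2 * (v2 * P2)))
                (pbar m r1 * pbar m P1 + pbar m r2 * (pbar m v2 * pbar m P2)).
  rewrite pbarD; apply: eqmD; first exact: pbarM.
  apply: eqm_trans (pbarM _ _ _) _; apply: eqmMl; exact: pbarM.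
have h2 : eqm m (pbar m (r1 * (v1 * P1) + r2 * P2))
                (pbar m r1 * (pbar m v1 * pbar m P1) + pbar m r2 * pbar m P2).
  rewrite pbarD; apply: eqmD; last exact: pbarM.
  apply: eqm_trans (pbarM _ _ _) _; apply: eqmMl; exact: pbarM.
apply: eqm_trans (eqmD (eqmMl a h1) (eqmMl b h2)) _.
set x1 := pbar m r1; set x2 := pbar m r2; set y1 := pbar m P1; set y2 := pbar m P2.
set w1 := pbar m v1; set w2 := pbar m v2.
have -> : a * (x1 * y1 + x2 * (w2 * y2)) + b * (x1 * (w1 * y1) + x2 * y2) =
   x1 * ((a + b * w1) * y1) + x2 * ((a * w2 + b) * y2) by ring.
exact: eqm_refl.
Qed.

Lemma dual_char (P1 P2 v1 v2 a b : {poly K}) :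
  edual m (QC_code m P1 (v1 * P1) (v2 * P2) P2) (coefv m a, coefv m b) <->
  eqm m ((a + b * pbar m v1) * pbar m P1) 0 /\ eqm m ((a * pbar m v2 + b) * pbar m P2) 0.
Proof.
split.
  move=> H.
  have key (r1 r2 : {poly K}) : tau m (pbar m r1 * ((a + b * pbar m v1) * pbar m P1) +
                           pbar m r2 * ((a * pbar m v2 + b) * pbar m P2)) = 0.
    rewrite -(tau_eqm (core_eqm _ _ _ _ _ _ r1 r2)) -edot_coefv; apply: H.
    by exists r1, r2.
  split; apply: keyZ => // j.
    have := key ('X^(j * m.-1)) 0; rewrite pbar0 mul0r addr0 => <-.
    apply: tau_eqm; apply: eqmM (eqm_refl _ _); apply: eqm_sym; exact: pbarXinv.
  have := key 0 ('X^(j * m.-1)); rewrite pbar0 mul0r add0r => <-.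
  apply: tau_eqm; apply: eqmM (eqm_refl _ _); apply: eqm_sym; exact: pbarXinv.
move=> [H1 H2] d [r1 [r2 ->]]; rewrite edot_coefv.
rewrite (tau_eqm (core_eqm _ _ _ _ _ _ r1 r2)) -(tau0 K m); apply: tau_eqm.
rewrite -[0](addr0 0); apply: eqmD.
  by rewrite -(mulr0 (pbar m r1)); apply: eqmMl.
by rewrite -(mulr0 (pbar m r2)); apply: eqmMl.
Qed.

End Dual.
Lemma dvd_prod_le (K : fieldType) (M : nat -> {poly K}) (r : seq nat) (a b : nat -> nat) :
  (forall s, s \in r -> (a s <= b s)%N) ->
  \prod_(s <- r) M s ^+ a s %| \prod_(s <- r) M s ^+ b s.
Proof.
move=> H; have -> : \prod_(s <- r) M s ^+ b s =
   (\prod_(s <- r) M s ^+ (b s - a s)) * \prod_(s <- r) M s ^+ a s.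
  rewrite -big_split /= big_seq [RHS]big_seq; apply: eq_bigr => s Hs.
  by rewrite -exprD subnK // H.
exact: dvdp_mull (dvdpp _).
Qed.

Lemma prod_comp (K : fieldType) (M : nat -> {poly K}) (r : seq nat) (a : nat -> nat) e :
  (forall s, s \in r -> (a s <= e)%N) ->
  \prod_(s <- r) M s ^+ (e - a s) * \prod_(s <- r) M s ^+ a s = \prod_(s <- r) M s ^+ e.
Proof.
move=> H; rewrite -big_split /= big_seq [RHS]big_seq; apply: eq_bigr => s Hs.
by rewrite -exprD subnK // H.
Qed.

Unset Implicit Arguments. Set Strict Implicit.

Theorem mainTheorem15
  (F : finFieldType) (p t l m : nat)
  (L : fieldType) (phi : {rmorphism F -> L}) (alpha : L)
  (M : nat -> {poly F})
  (v1 v2 : {poly F}) (r1 r2 : nat -> nat) :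
  p \in [pchar F] ->
  (1 <= t)%N -> (1 <= l)%N -> coprime l p -> m = (l * p ^ t)%N ->
  l.-primitive_root alpha ->
  (forall s, s \in Tl #|F| l ->
     map_poly phi (M s) =
       \prod_(i in cyc_coset #|F| l s) ('X - (alpha ^+ i)%:P)) ->
  coprimep (v1 * v2 - 1) ('X^m - 1) ->
  (forall s, s \in Tl #|F| l ->
     [/\ (0 < r1 s)%N, (r1 s < r2 s)%N &
         (r2 s < p ^ t - r2 (negrep #|F| l s))%N]) ->
  let P1 := \prod_(s <- Tl #|F| l) M s ^+ r1 s in
  let P2 := \prod_(s <- Tl #|F| l) M s ^+ r2 s in
  let Q1 := \prod_(s <- Tl #|F| l) M s ^+ (p ^ t - r1 (negrep #|F| l s)) in
  let Q2 := \prod_(s <- Tl #|F| l) M s ^+ (p ^ t - r2 (negrep #|F| l s)) in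
  let C := QC_code m P1 (v1 * P1) (v2 * P2) P2 in
  (forall c, edual m C c <->
     QC_code m Q1 (- pbar m v2 * Q1) (- pbar m v1 * Q2) Q2 c) /\
  (forall c, edual m C c -> C c).
Proof.
move=> pch t1 l_gt0 clp mE prim HM cop hr P1 P2 Q1 Q2 C.
have pr : prime p := pcharf_prime pch.
have qco : coprime #|F| l.
  have cardE : #|F| = (p ^ logn p #|F|)%N := card_pprimeChar pch.
  by rewrite cardE coprimeXl // coprime_sym.
have m_gt1 : (1 < m)%N.
  rewrite mE; apply: (@leq_trans (1 * (2 * 1))) => //.
  apply: leq_mul => //; case: (t) t1 => // t' _; rewrite expnS.
  by apply: leq_mul; [exact: prime_gt1 | rewrite expn_gt0 prime_gt0].
have m_gt0 : (0 < m)%N := ltnW m_gt1.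
have HMm : Mm F m = \prod_(s <- (Tl #|F| l)) M s ^+ (p ^ t)%N.
  by rewrite /Mm mE (XmFrob t l pch) (Xl_prod l_gt0 qco prim HM) prodrXl.
have negT s : s \in (Tl #|F| l) -> (negrep #|F| l) s \in (Tl #|F| l) by move=> _; exact: (negrep_Tl l_gt0 qco s).
have hr' s : s \in (Tl #|F| l) -> [/\ (r1 s < r2 s)%N, (r2 s < (p ^ t)%N - r2 ((negrep #|F| l) s))%N,
    (r1 ((negrep #|F| l) s) < r2 ((negrep #|F| l) s))%N & (r2 ((negrep #|F| l) s) < (p ^ t)%N - r2 s)%N].
  move=> Hs; have [_ a1 a2] := hr s Hs; have [_ b1 b2] := hr _ (negT s Hs).
  by rewrite (negrepK l_gt0 qco Hs) in b2; split.
have QP (rho : nat -> nat) : (forall s, s \in (Tl #|F| l) -> (rho ((negrep #|F| l) s) <= (p ^ t)%N)%N) ->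
    eqm m ((\prod_(s <- (Tl #|F| l)) M s ^+ ((p ^ t)%N - rho ((negrep #|F| l) s))) * pbar m (\prod_(s <- (Tl #|F| l)) M s ^+ rho s)) 0 /\
    (forall h, eqm m (h * pbar m (\prod_(s <- (Tl #|F| l)) M s ^+ rho s)) 0 ->
       \prod_(s <- (Tl #|F| l)) M s ^+ ((p ^ t)%N - rho ((negrep #|F| l) s)) %| h).
  move=> Hle.
  have [u [u' [uu' pu]]] := pbar_P l_gt0 qco m_gt0 prim HM rho.
  set Q := \prod_(s <- (Tl #|F| l)) M s ^+ ((p ^ t)%N - rho ((negrep #|F| l) s)).
  set N := \prod_(s <- (Tl #|F| l)) M s ^+ rho ((negrep #|F| l) s).
  set P := \prod_(s <- (Tl #|F| l)) M s ^+ rho s.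
  have QN : Q * N = Mm F m by rewrite HMm /Q /N prod_comp.
  have N0 : N != 0 by apply: contra_neq (Mm_neq0 F m_gt0); rewrite -QN => ->; rewrite mulr0.
  split.
    apply: (@eqm_trans _ _ _ (Q * (u * N))); first exact: eqmMl.
    by rewrite eqm0 mulrCA QN; apply: dvdp_mull (dvdpp _).
  move=> h Hh; rewrite -(dvdp_mul2r _ _ N0) QN -eqm0.
  apply: (@eqm_trans _ _ _ (u' * (h * pbar m P))); last by rewrite -(mulr0 u'); apply: eqmMl.
  apply: (@eqm_trans _ _ _ (u' * (h * (u * N)))); last by apply: eqmMl; apply: eqmMl; apply: eqm_sym.
  have -> : u' * (h * (u * N)) = (h * N) * (u * u') by ring.
  rewrite -{1}[h * N]mulr1; apply: eqmMl; apply: eqm_sym; exact: uu'.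
have [QP1 QD1] := QP r1 (fun s Hs => let: And4 _ _ x y := hr' s Hs in ltnW (ltn_trans x (leq_trans y (leq_subr _ _)))).
have [QP2 QD2] := QP r2 (fun s Hs => let: And4 _ _ _ y := hr' s Hs in ltnW (leq_trans y (leq_subr _ _))).
rewrite -/Q1 -/Q2 -/P1 -/P2 in QP1 QD1 QP2 QD2.
have [[u1 u2] /= Bz] := Bezout_eq1_coprimepP _ _ cop.
have hw' : eqm m (- u1 * (1 - v1 * v2)) 1.
  rewrite /eqm; have -> : - u1 * (1 - v1 * v2) - 1 = - (u2 * Mm F m).
    by rewrite /Mm -{2}Bz; ring.
  by rewrite dvdpNr; apply: dvdp_mull (dvdpp _).
set V1 := pbar m v1; set V2 := pbar m v2.
have hw : eqm m (- pbar m u1 * (1 - V1 * V2)) 1.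
  have h1 := pbar_eqm hw'; rewrite pbar1 // in h1.
  apply: eqm_trans _ h1; apply: eqm_sym; apply: eqm_trans (pbarM _ _ _) _.
  rewrite pbarN; apply: eqmMl.
  rewrite pbarD pbarN pbar1 //; apply: eqmD; [exact: eqm_refl | apply: eqmN; exact: pbarM].
set w := - pbar m u1; set w' := - u1.
have part1 c : edual m C c <-> QC_code m Q1 (- V2 * Q1) (- V1 * Q2) Q2 c.
  split.
    move=> Hc.
    set a := rpoly c.1; set b := rpoly c.2.
    have ec : c = (coefv m a, coefv m b) by case: c {Hc} @a @b => c1 c2 /=; rewrite !coefv_poly.
    rewrite ec in Hc; have [G1 G2] := (dual_char m_gt1 P1 P2 v1 v2 a b).1 Hc.
    have /dvdpP [k1 Ek1] := QD1 _ G1.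
    have /dvdpP [k2 Ek2] := QD2 _ G2.
    exists (w * k1), (w * k2); rewrite ec; congr pair; apply: coefv_eqm; apply: eqm_sym.
      have -> : w * k1 * Q1 + w * k2 * (- V1 * Q2) = w * (k1 * Q1) - w * V1 * (k2 * Q2) by ring.
      rewrite -Ek1 -Ek2.
      have -> : w * (a + b * V1) - w * V1 * (a * V2 + b) = a * (w * (1 - V1 * V2)) by ring.
      rewrite -{2}[a]mulr1; exact: eqmMl.
    have -> : w * k1 * (- V2 * Q1) + w * k2 * Q2 = - w * V2 * (k1 * Q1) + w * (k2 * Q2) by ring.
    rewrite -Ek1 -Ek2.
    have -> : - w * V2 * (a + b * V1) + w * (a * V2 + b) = b * (w * (1 - V1 * V2)) by ring.
    rewrite -{2}[b]mulr1; exact: eqmMl.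
  move=> [s1 [s2 ->]]; apply/dual_char => //; split.
    have -> : (s1 * Q1 + s2 * (- V1 * Q2) + (s1 * (- V2 * Q1) + s2 * Q2) * V1) * pbar m P1
       = (s1 * (1 - V1 * V2)) * (Q1 * pbar m P1) by ring.
    by rewrite -(mulr0 (s1 * (1 - V1 * V2))); apply: eqmMl.
  have -> : ((s1 * Q1 + s2 * (- V1 * Q2)) * V2 + (s1 * (- V2 * Q1) + s2 * Q2)) * pbar m P2
     = (s2 * (1 - V1 * V2)) * (Q2 * pbar m P2) by ring.
  by rewrite -(mulr0 (s2 * (1 - V1 * V2))); apply: eqmMl.
split => // c /part1 [s1 [s2 ->]].
have /dvdpP [f Ef] : P1 %| P2.
  apply: dvd_prod_le => s Hs; by case: (hr' s Hs) => x _ _ _; exact: ltnW.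
have /dvdpP [g1 Eg1] : P2 %| Q1.
  apply: dvd_prod_le => s Hs; case: (hr' s Hs) => _ x y _.
  apply: ltnW; apply: (leq_trans x); apply: leq_sub2l; exact: ltnW.
have /dvdpP [g2 Eg2] : P2 %| Q2.
  apply: dvd_prod_le => s Hs; case: (hr' s Hs) => _ x _ _; exact: ltnW.
set al := s1 * g1 + s2 * (- V1 * g2).
set be := s1 * (- V2 * g1) + s2 * g2.
set ga := w' * (al - v2 * be).
exists (f * ga), (be - v1 * ga); congr pair; apply: coefv_eqm.
  have -> : s1 * Q1 + s2 * (- V1 * Q2) = P2 * al by rewrite Eg1 Eg2 /al; ring.
  have -> : f * ga * P1 + (be - v1 * ga) * (v2 * P2) =
     P2 * ((al - v2 * be) * (w' * (1 - v1 * v2))) + P2 * (v2 * be).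
    by rewrite Ef /ga; ring.
  have -> : P2 * al = P2 * (al - v2 * be) + P2 * (v2 * be) by ring.
  apply: eqmD; last exact: eqm_refl.
  apply: eqmMl; rewrite -{1}[al - v2 * be]mulr1; apply: eqmMl; exact: eqm_sym.
have -> : s1 * (- V2 * Q1) + s2 * Q2 = P2 * be by rewrite Eg1 Eg2 /be; ring.
have -> : f * ga * (v1 * P1) + (be - v1 * ga) * P2 = P2 * be by rewrite Ef; ring.
exact: eqm_refl.
Qed.
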